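(* Let $G$ be a countably infinite graph. (1) $G$ is HM-homogeneous iff it is HI-homogeneous iff it is HB-homogeneous iff it is HA-homogeneous iff $G\cong K_\omega$. (2) $G$ is MI-homogeneous iff it is MA-homogeneous iff $G\cong K_\omega$ or $G\cong I_\omega$.
   Context: All graphs are undirected and loopless; subgraphs are induced. A homomorphism maps adjacent vertices to adjacent vertices; a monomorphism is an injective homomorphism. For $\mathrm{X}\in\{\mathrm{H},\mathrm{M}\}$ an X-morphism is a homomorphism or monomorphism, respectively. For $\mathrm{Y}\in\{\mathrm{I},\mathrm{A},\mathrm{B},\mathrm{M}\}$, a Y-morphism $G\to G$ is, respectively, a self-embedding (injective map preserving adjacency and non-adjacency), an automorphism, a bijective endomorphism, or an injective endomorphism. $G$ is XY-homogeneous if every X-morphism between finite induced subgraphs of $G$ is the restriction of a Y-morphism $G\to G$. $K_\omega$ is the countable complete graph and $I_\omega$ the countable edgeless graph. *)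

(* Defs.v *)
From Stdlib Require Import List.

Definition is_graph {V : Type} (adj : V -> V -> Prop) : Prop :=
  (forall x y, adj x y -> adj y x) /\ (forall x, ~ adj x x).

Definition bijective_map {A B : Type} (f : A -> B) : Prop :=
  (forall x y, f x = f y -> x = y) /\ (forall b, exists a, f a = b).

Definition countably_infinite (V : Type) : Prop :=
  exists f : nat -> V, bijective_map f.

(* A finite set of vertices (the vertex set of a finite induced subgraph). *)
Definition finite_set {V : Type} (A : V -> Prop) : Prop :=
  exists l : list V, forall x, A x <-> In x l.

(* Kinds of local morphisms (X) and global morphisms (Y). *)
Inductive XKind := XH | XM.
Inductive YKind := YI | YA | YB | YM.

(* f, restricted to A, is an X-morphism from the induced subgraph G[A]
   to the induced subgraph G[B]. *)
Definition local_morph {V : Type} (adj : V -> V -> Prop) (X : XKind)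
  (A B : V -> Prop) (f : V -> V) : Prop :=
  (forall x, A x -> B (f x)) /\
  (forall x y, A x -> A y -> adj x y -> adj (f x) (f y)) /\
  match X with
  | XH => True
  | XM => forall x y, A x -> A y -> f x = f y -> x = y
  end.

Definition global_morph {V : Type} (adj : V -> V -> Prop) (Y : YKind)
  (g : V -> V) : Prop :=
  match Y with
  | YI => (forall x y, g x = g y -> x = y) /\ (forall x y, adj x y <-> adj (g x) (g y))
  | YA => bijective_map g /\ (forall x y, adj x y <-> adj (g x) (g y))
  | YB => bijective_map g /\ (forall x y, adj x y -> adj (g x) (g y))
  | YM => (forall x y, g x = g y -> x = y) /\ (forall x y, adj x y -> adj (g x) (g y))
  end.

Definition XY_homogeneous {V : Type} (adj : V -> V -> Prop) (X : XKind) (Y : YKind) : Prop :=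
  forall (A B : V -> Prop) (f : V -> V),
    finite_set A -> finite_set B -> local_morph adj X A B f ->
    exists g : V -> V, global_morph adj Y g /\ (forall x, A x -> g x = f x).

Definition graph_iso {V W : Type} (adjV : V -> V -> Prop) (adjW : W -> W -> Prop) : Prop :=
  exists h : V -> W, bijective_map h /\ (forall x y, adjV x y <-> adjW (h x) (h y)).

Definition K_omega : nat -> nat -> Prop := fun x y => x <> y.
Definition I_omega : nat -> nat -> Prop := fun _ _ => False.

(* Main.v *)
Require Import Defs.
From Stdlib Require Import List.
From Stdlib Require Import Classical ClassicalEpsilon.

Definition swp {V : Type} (a c x : V) : V :=
  if excluded_middle_informative (x = a) then c
  else if excluded_middle_informative (x = c) then a else x.

Lemma swp_invol {V : Type} (a c x : V) : swp a c (swp a c x) = x.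
Proof.
  unfold swp.
  destruct (excluded_middle_informative (x = a)) as [H1|H1].
  - destruct (excluded_middle_informative (c = a)) as [H2|H2]; [congruence|].
    destruct (excluded_middle_informative (c = c)); congruence.
  - destruct (excluded_middle_informative (x = c)) as [H2|H2].
    + destruct (excluded_middle_informative (a = a)); congruence.
    + destruct (excluded_middle_informative (x = a)); [congruence|].
      destruct (excluded_middle_informative (x = c)); congruence.
Qed.

Lemma ext_list {V : Type} (f : V -> V) (l : list V) :
  (forall x y, In x l -> In y l -> f x = f y -> x = y) ->
  exists g, bijective_map g /\ forall x, In x l -> g x = f x.
Proof.
  induction l as [|a l IH]; intros Hinj.
  - exists (fun x => x). split; [split; auto; intros b; exists b; auto|].
    intros x [].
  - destruct IH as [g' [[Gi Gs] Ge]].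
    { intros x y Hx Hy; apply Hinj; simpl; auto. }
    destruct (Gs (f a)) as [c Hc].
    exists (fun x => g' (swp a c x)). split.
    + split.
      * intros x y H. apply Gi in H.
        rewrite <- (swp_invol a c x), <- (swp_invol a c y), H; reflexivity.
      * intros b. destruct (Gs b) as [d Hd]. exists (swp a c d).
        rewrite swp_invol; auto.
    + intros x [Hx|Hx].
      * subst x. unfold swp.
        destruct (excluded_middle_informative (a = a)); congruence.
      * unfold swp.
        destruct (excluded_middle_informative (x = a)) as [E|E].
        { subst; auto. }
        destruct (excluded_middle_informative (x = c)) as [E2|E2].
        { exfalso. apply E. apply Hinj; simpl; auto.
          subst x. rewrite <- Ge by auto. auto. }
        apply Ge; auto.
Qed.

Lemma ext_bij {V : Type} (A : V -> Prop) (f : V -> V) :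
  finite_set A -> (forall x y, A x -> A y -> f x = f y -> x = y) ->
  exists g, bijective_map g /\ forall x, A x -> g x = f x.
Proof.
  intros [l Hl] Hinj.
  destruct (ext_list f l) as [g [Hb He]].
  { intros x y Hx Hy; apply Hinj; apply Hl; auto. }
  exists g; split; auto. intros x Hx; apply He, Hl, Hx.
Qed.

Definition complete {V : Type} (adj : V -> V -> Prop) := forall x y, x <> y -> adj x y.
Definition edgeless {V : Type} (adj : V -> V -> Prop) := forall x y, ~ adj x y.

Lemma gm_inj {V : Type} (adj : V -> V -> Prop) Y g :
  global_morph adj Y g -> forall x y, g x = g y -> x = y.
Proof. destruct Y; simpl; intros H; try apply H; apply H. Qed.

Lemma YA_all {V : Type} (adj : V -> V -> Prop) X Y :
  XY_homogeneous adj X YA -> XY_homogeneous adj X Y.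
Proof.
  intros H A B f HA HB Hm. destruct (H A B f HA HB Hm) as [g [[[Gi Gs] Ga] Ge]].
  exists g; split; auto. destruct Y; simpl; repeat split; auto; apply Ga.
Qed.

Lemma H_complete {V : Type} (adj : V -> V -> Prop) Y :
  is_graph adj -> XY_homogeneous adj XH Y -> complete adj.
Proof.
  intros [Hs Hi] H x y Hxy. apply NNPP; intro Hn.
  destruct (H (fun z => z = x \/ z = y) (fun z => z = x) (fun _ => x)) as [g [Gm Ge]].
  - exists (x :: y :: nil). intros z; simpl; split; [intros [E|E]; subst; auto | intros [E|[E|[]]]; subst; auto].
  - exists (x :: nil). intros z; simpl; split; [intros E; subst; auto | intros [E|[]]; subst; auto].
  - repeat split; auto.
    intros a b [Ha|Ha] [Hb|Hb] Hab; subst; exfalso;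
      [eapply Hi; eauto | eauto | eauto | eapply Hi; eauto].
  - apply Hxy. apply (gm_inj adj Y g Gm). rewrite !Ge; auto.
Qed.

Lemma complete_HA {V : Type} (adj : V -> V -> Prop) :
  is_graph adj -> complete adj -> XY_homogeneous adj XH YA.
Proof.
  intros [Hs Hi] Hc A B f HA HB [_ [Ha _]].
  destruct (ext_bij A f HA) as [g [Gb Ge]].
  { intros x y Hx Hy E. apply NNPP; intro N.
    apply (Hi (f x)). rewrite E at 2. apply Ha; auto. }
  exists g; split; auto. simpl; split; auto.
  destruct Gb as [Gi _]. intros x y; split; intro H.
  - apply Hc. intro E. apply Gi in E. subst. eapply Hi; eauto.
  - apply Hc. intro E. subst. eapply Hi; eauto.
Qed.

Lemma MI_ce {V : Type} (adj : V -> V -> Prop) :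
  is_graph adj -> XY_homogeneous adj XM YI -> complete adj \/ edgeless adj.
Proof.
  intros [Hs Hi] H.
  destruct (classic (exists x y, adj x y)) as [[x [y Hxy]]|N].
  2:{ right. intros x y A. apply N; eauto. }
  left. intros u v Huv. apply NNPP; intro Hn.
  assert (Exy : x <> y) by (intro; subst; eapply Hi; eauto).
  set (f := fun z => if excluded_middle_informative (z = u) then x else y).
  assert (fu : f u = x) by (unfold f; destruct (excluded_middle_informative (u = u)); congruence).
  assert (fv : f v = y) by (unfold f; destruct (excluded_middle_informative (v = u)); congruence).
  clearbody f.
  destruct (H (fun z => z = u \/ z = v) (fun z => z = x \/ z = y) f) as [g [[_ Ga] Ge]].
  - exists (u :: v :: nil). intros z; simpl; split; [intros [E|E]; rewrite E; auto | intros [E|[E|[]]]; rewrite <- E; auto].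
  - exists (x :: y :: nil). intros z; simpl; split; [intros [E|E]; rewrite E; auto | intros [E|[E|[]]]; rewrite <- E; auto].
  - repeat split.
    + intros a [Ha|Ha]; subst; auto.
    + intros a b [Ha|Ha] [Hb|Hb] Hab; subst; exfalso;
        [eapply Hi; eauto | eauto | eauto | eapply Hi; eauto].
    + intros a b [Ha|Ha] [Hb|Hb] E; subst; auto;
        rewrite ?fu, ?fv in E; congruence.
  - apply Hn. apply Ga. rewrite !Ge by auto. rewrite fu, fv; auto.
Qed.

Lemma ce_MA {V : Type} (adj : V -> V -> Prop) :
  is_graph adj -> complete adj \/ edgeless adj -> XY_homogeneous adj XM YA.
Proof.
  intros [Hs Hi] Hce A B f HA HB [_ [_ Hinj]].
  destruct (ext_bij A f HA Hinj) as [g [Gb Ge]].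
  exists g; split; auto. simpl; split; auto.
  destruct Gb as [Gi _].
  destruct Hce as [Hc|He]; intros x y; split; intro H.
  - apply Hc. intro E. apply Gi in E. subst. eapply Hi; eauto.
  - apply Hc. intro E. subst. eapply Hi; eauto.
  - exfalso; eapply He; eauto.
  - exfalso; eapply He; eauto.
Qed.

Lemma inv_bij {V : Type} (e : nat -> V) :
  bijective_map e -> exists h : V -> nat, bijective_map h /\ forall v, e (h v) = v.
Proof.
  intros [Ei Es].
  exists (fun v => proj1_sig (constructive_indefinite_description _ (Es v))).
  split.
  - split.
    + intros x y H.
      destruct (constructive_indefinite_description _ (Es x)) as [a Ha].
      destruct (constructive_indefinite_description _ (Es y)) as [b Hb].
      simpl in H; subst; auto.
    + intros n. exists (e n).
      destruct (constructive_indefinite_description _ (Es (e n))) as [a Ha].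
      simpl; auto.
  - intros v. destruct (constructive_indefinite_description _ (Es v)) as [a Ha]; auto.
Qed.

Lemma iso_K {V : Type} (adj : V -> V -> Prop) :
  is_graph adj -> countably_infinite V -> (graph_iso adj K_omega <-> complete adj).
Proof.
  intros [Hs Hi] [e Eb]. split.
  - intros [h [[Hi' _] Ha]] x y N. apply Ha. unfold K_omega. intro E. apply N, Hi', E.
  - intros Hc. destruct (inv_bij e Eb) as [h [Hb He]]. exists h; split; auto.
    intros x y. unfold K_omega. split; intro H.
    + intro E. assert (x = y) by (rewrite <- (He x), <- (He y), E; auto). subst. eapply Hi; eauto.
    + apply Hc. intro E; subst; auto.
Qed.

Lemma iso_I {V : Type} (adj : V -> V -> Prop) :
  is_graph adj -> countably_infinite V -> (graph_iso adj I_omega <-> edgeless adj).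
Proof.
  intros [Hs Hi] [e Eb]. split.
  - intros [h [_ Ha]] x y A. apply Ha in A. exact A.
  - intros Hc. destruct (inv_bij e Eb) as [h [Hb He]]. exists h; split; auto.
    intros x y. unfold I_omega. split; intro H; [eapply Hc; eauto | destruct H].
Qed.

Theorem theorem3p2 (V : Type) (adj : V -> V -> Prop)
  (Hg : is_graph adj) (Hc : countably_infinite V) :
  ((XY_homogeneous adj XH YM <-> XY_homogeneous adj XH YI) /\
   (XY_homogeneous adj XH YI <-> XY_homogeneous adj XH YB) /\
   (XY_homogeneous adj XH YB <-> XY_homogeneous adj XH YA) /\
   (XY_homogeneous adj XH YA <-> graph_iso adj K_omega)) /\
  ((XY_homogeneous adj XM YI <-> XY_homogeneous adj XM YA) /\
   (XY_homogeneous adj XM YA <-> (graph_iso adj K_omega \/ graph_iso adj I_omega))).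
Proof.
  pose proof (iso_K adj Hg Hc) as IK. pose proof (iso_I adj Hg Hc) as II.
  assert (F : forall Y, XY_homogeneous adj XH Y -> XY_homogeneous adj XH YA).
  { intros Y H. apply complete_HA; auto. eapply H_complete; eauto. }
  assert (G : forall Y, XY_homogeneous adj XH YA -> XY_homogeneous adj XH Y).
  { intros Y; apply YA_all. }
  assert (M1 : XY_homogeneous adj XM YI -> XY_homogeneous adj XM YA).
  { intros H. apply ce_MA; auto. apply MI_ce; auto. }
  split; [repeat split|split; split].
  all: try (intros H; apply G; apply F in H; exact H).
  - intros H; apply IK. eapply H_complete; eauto.
  - intros H; apply complete_HA; auto; apply IK; auto.
  - exact M1.
  - apply YA_all.
  - intros H. apply (YA_all adj XM YI) in H. apply MI_ce in H; auto.
    destruct H; [left; apply IK | right; apply II]; auto.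
  - intros H. apply ce_MA; auto. destruct H; [left; apply IK | right; apply II]; auto.
Qed.
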